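(* Consider the following model. A principal P and an agent A interact over two periods $t\in\{1,2\}$. States $\omega_t\in\{0,1\}$ satisfy $\Pr[\omega_1=1]=\mu_0\in(0,1)$ and $\Pr[\omega_2=\omega\mid\omega_1=\omega]=\rho\in(1/2,1)$. In each period A chooses $e_t\in\{0,1\}$; if $e_t=1$ he observes $\omega_t$, if $e_t=0$ he observes $\omega_t$ with probability $\pi\in(0,1)$ and nothing otherwise. A reports $r_t\in\{\varnothing,\omega_t\}$ if he observed $\omega_t$, else $r_t=\varnothing$. P chooses $x=\hat x(r_1,r_2)\in\{0,1\}$ at the end of period 2. Payoffs: P gets $\mathbb{1}[x=\omega_2]-k(e_1+e_2)$, A gets $x-c(e_1+e_2)$, $c,k>0$. P commits to a mechanism ($\sigma_1\in\{0,1\}$, $\sigma_2:\{\varnothing,0,1\}\to\{0,1\}$, $\hat x$) and A best-responds, following the recommendation and disclosing when indifferent. Let $\kappa=k/(1-\pi)$ and $\gamma=c/(1-\pi)$. If $\kappa,\gamma\in(0,1-\rho]$, then the optimal mechanism coincides with the baseline mechanism: $\sigma_1=0$, $\sigma_2(r_1)=1$ for all $r_1$, with the efficient assignment $\hat x(r_1,r_2)=\mathbb{1}[r_2=1]$ (assigning $0$ if the requested period-2 result is not reported).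
   Context: The baseline mechanism is the one P would choose if she controlled testing directly and observed all revealed results; for $\kappa\le1-\rho$ it never tests in period 1, always tests in period 2, and sets $x=\omega_2$. *)

(* Defs.v *)
From Stdlib Require Import Reals Lra.
Open Scope R_scope.

(* Reports: None = empty report (varnothing), Some w = reported state w. *)
Definition report := option bool.

Record mechanism := Mech {
  sig1 : bool;
  sig2 : report -> bool;
  xhat : report -> report -> bool
}.

Definition b2R (b : bool) : R := if b then 1 else 0.

Section Model.
Variables (mu0 rho pi c k : R).

Definition obsprob (e : bool) : R := if e then 1 else pi.
Definition p1 (w : bool) : R := if w then mu0 else 1 - mu0.
Definition tr (w1 w2 : bool) : R := if Bool.eqb w1 w2 then rho else 1 - rho.
Definition qof (w : bool) : R := tr w true.
Definition mu1 : R := mu0 * rho + (1 - mu0) * (1 - rho).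

Definition d2 (m : mechanism) (r1 : report) (w : bool) : bool :=
  if Rle_dec (b2R (xhat m r1 None)) (b2R (xhat m r1 (Some w))) then true else false.
Definition r2obs (m : mechanism) (r1 : report) (w : bool) : report :=
  if d2 m r1 w then Some w else None.

Definition Vobs2 (m : mechanism) (r1 : report) (w : bool) : R :=
  b2R (xhat m r1 (r2obs m r1 w)).
Definition Vnon2 (m : mechanism) (r1 : report) : R := b2R (xhat m r1 None).

Definition EVobs2 (m : mechanism) (q : R) (r1 : report) : R :=
  q * Vobs2 m r1 true + (1 - q) * Vobs2 m r1 false.
Definition U2 (m : mechanism) (q : R) (r1 : report) (e : bool) : R :=
  obsprob e * EVobs2 m q r1 + (1 - obsprob e) * Vnon2 m r1 - c * b2R e.

Definition e2 (m : mechanism) (q : R) (r1 : report) : bool :=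
  let s := sig2 m r1 in
  if Rle_dec (U2 m q r1 (negb s)) (U2 m q r1 s) then s else negb s.
Definition W2 (m : mechanism) (q : R) (r1 : report) : R := U2 m q r1 (e2 m q r1).

Definition d1 (m : mechanism) (w : bool) : bool :=
  if Rle_dec (W2 m (qof w) None) (W2 m (qof w) (Some w)) then true else false.
Definition r1obs (m : mechanism) (w : bool) : report :=
  if d1 m w then Some w else None.
Definition V1obs (m : mechanism) (w : bool) : R := W2 m (qof w) (r1obs m w).
Definition EVobs1 (m : mechanism) : R :=
  mu0 * V1obs m true + (1 - mu0) * V1obs m false.
Definition U1 (m : mechanism) (e : bool) : R :=
  obsprob e * EVobs1 m + (1 - obsprob e) * W2 m mu1 None - c * b2R e.

Definition e1 (m : mechanism) : bool :=
  let s := sig1 m in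
  if Rle_dec (U1 m (negb s)) (U1 m s) then s else negb s.

Definition P2 (m : mechanism) (q : R) (r1 : report) (w2 : bool) : R :=
  let e := e2 m q r1 in
  obsprob e * b2R (Bool.eqb (xhat m r1 (r2obs m r1 w2)) w2)
  + (1 - obsprob e) * b2R (Bool.eqb (xhat m r1 None) w2)
  - k * b2R e.

Definition VP (m : mechanism) : R :=
  let e := e1 m in
  p1 true *
    (tr true true * (obsprob e * P2 m (qof true) (r1obs m true) true
                     + (1 - obsprob e) * P2 m mu1 None true)
   + tr true false * (obsprob e * P2 m (qof true) (r1obs m true) false
                     + (1 - obsprob e) * P2 m mu1 None false))
  + p1 false *
    (tr false true * (obsprob e * P2 m (qof false) (r1obs m false) true
                     + (1 - obsprob e) * P2 m mu1 None true)
   + tr false false * (obsprob e * P2 m (qof false) (r1obs m false) false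
                     + (1 - obsprob e) * P2 m mu1 None false))
  - k * b2R e.

End Model.

Definition baseline : mechanism :=
  Mech false (fun _ => true)
       (fun _ r2 => match r2 with Some true => true | _ => false end).

(* Main.v *)
Require Import Defs.
From Stdlib Require Import Reals Lra Psatz.
Open Scope R_scope.

Section S.
Variables (mu0 rho pi c k : R).
Hypothesis Hmu0 : 0 < mu0 < 1.
Hypothesis Hrho : 1/2 < rho < 1.
Hypothesis Hpi : 0 < pi < 1.
Hypothesis Hc : 0 < c.
Hypothesis Hk : 0 < k.
Hypothesis Hk' : k <= (1 - pi) * (1 - rho).
Hypothesis Hc' : c <= (1 - pi) * (1 - rho).

Lemma P2_pair m q r1 a b : 0 <= a -> 0 <= b -> a + b = 1 -> a <= rho -> b <= rho ->
  a * P2 pi c k m q r1 true + b * P2 pi c k m q r1 false <= 1 - k.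
Proof.
  intros. unfold P2, obsprob, b2R.
  destruct (e2 _ _ _ _ _); destruct (xhat m r1 (r2obs m r1 true));
  destruct (xhat m r1 (r2obs m r1 false)); destruct (xhat m r1 None); simpl; nra.
Qed.

Lemma bound m : VP mu0 rho pi c k m <= 1 - k.
Proof.
  unfold VP, p1, tr, qof; simpl.
  set (e := e1 mu0 rho pi c m).
  set (X1 := P2 pi c k m (tr rho true true) (r1obs rho pi c m true) true).
  set (X2 := P2 pi c k m (tr rho true true) (r1obs rho pi c m true) false).
  set (Y1 := P2 pi c k m (tr rho false true) (r1obs rho pi c m false) true).
  set (Y2 := P2 pi c k m (tr rho false true) (r1obs rho pi c m false) false).
  set (N1 := P2 pi c k m (mu1 mu0 rho) None true).
  set (N2 := P2 pi c k m (mu1 mu0 rho) None false).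
  assert (HX : rho * X1 + (1 - rho) * X2 <= 1 - k) by (apply P2_pair; lra).
  assert (HY : (1 - rho) * Y1 + rho * Y2 <= 1 - k) by (apply P2_pair; lra).
  assert (HN : (mu0 * rho + (1 - mu0) * (1 - rho)) * N1
              + (mu0 * (1 - rho) + (1 - mu0) * rho) * N2 <= 1 - k)
    by (apply P2_pair; nra).
  assert (Ho : 0 <= obsprob pi e <= 1) by (unfold obsprob; destruct e; lra).
  assert (Hb : 0 <= b2R e) by (unfold b2R; destruct e; lra).
  set (o := obsprob pi e) in *.
  assert (H1 : o * (mu0 * (rho * X1 + (1 - rho) * X2)) <= o * (mu0 * (1 - k)))
    by (apply Rmult_le_compat_l; [lra|]; apply Rmult_le_compat_l; lra).
  assert (H2 : o * ((1-mu0) * ((1 - rho) * Y1 + rho * Y2)) <= o * ((1-mu0) * (1 - k)))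
    by (apply Rmult_le_compat_l; [lra|]; apply Rmult_le_compat_l; lra).
  assert (H3 : (1 - o) * ((mu0 * rho + (1 - mu0) * (1 - rho)) * N1
              + (mu0 * (1 - rho) + (1 - mu0) * rho) * N2) <= (1 - o) * (1 - k))
    by (apply Rmult_le_compat_l; lra).
  assert (k * b2R e >= 0) by nra.
  nra.
Qed.

Lemma d2_base r1 w : Defs.d2 baseline r1 w = true.
Proof. unfold Defs.d2, b2R; destruct w; simpl; destruct Rle_dec; auto; lra. Qed.

Lemma e2_base q r1 : 1 - rho <= q -> e2 pi c baseline q r1 = true.
Proof.
  intros Hq. unfold e2, U2, EVobs2, Vobs2, Vnon2, r2obs, obsprob. rewrite !d2_base.
  simpl. unfold b2R. destruct Rle_dec; auto. exfalso. apply n. nra.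
Qed.

Lemma W2_base q r1 : 1 - rho <= q -> W2 pi c baseline q r1 = q - c.
Proof.
  intros Hq. unfold W2. rewrite e2_base; auto.
  unfold U2, EVobs2, Vobs2, Vnon2, r2obs, obsprob. rewrite !d2_base. simpl. unfold b2R. lra.
Qed.

Lemma P2_base q r1 w : 1 - rho <= q -> P2 pi c k baseline q r1 w = 1 - k.
Proof.
  intros Hq. unfold P2. rewrite e2_base; auto. unfold r2obs. rewrite d2_base.
  unfold obsprob, b2R. destruct w; simpl; lra.
Qed.

Lemma e1_base : e1 mu0 rho pi c baseline = false.
Proof.
  assert (Hm : 1 - rho <= mu1 mu0 rho) by (unfold mu1; nra).
  unfold e1. simpl. destruct Rle_dec as [|n]; auto. exfalso; apply n.
  unfold U1, EVobs1, V1obs, r1obs, d1, qof, tr, obsprob. simpl.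
  destruct (Defs.d1 rho pi c baseline true); destruct (Defs.d1 rho pi c baseline false);
  rewrite !W2_base; try lra. all: unfold mu1; nra.
Qed.

Lemma base_val : VP mu0 rho pi c k baseline = 1 - k.
Proof.
  assert (Hm : 1 - rho <= mu1 mu0 rho) by (unfold mu1; nra).
  unfold VP. rewrite e1_base. rewrite !P2_base; unfold qof, tr; simpl; try lra.
Qed.

End S.

Theorem propositionC2 (mu0 rho pi c k : R)
  (Hmu0 : 0 < mu0 < 1) (Hrho : 1/2 < rho < 1) (Hpi : 0 < pi < 1)
  (Hc : 0 < c) (Hk : 0 < k)
  (Hkappa : k / (1 - pi) <= 1 - rho) (Hgamma : c / (1 - pi) <= 1 - rho) :
  forall m : mechanism, VP mu0 rho pi c k m <= VP mu0 rho pi c k baseline.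
Proof.
  intros m.
  assert (Hk' : k <= (1 - pi) * (1 - rho)).
  { replace k with (k / (1 - pi) * (1 - pi)) by (field; lra).
    apply (Rmult_le_compat_r (1 - pi)) in Hkappa; lra. }
  assert (Hc' : c <= (1 - pi) * (1 - rho)).
  { replace c with (c / (1 - pi) * (1 - pi)) by (field; lra).
    apply (Rmult_le_compat_r (1 - pi)) in Hgamma; lra. }
  rewrite base_val; auto.
  apply bound; auto.
Qed.
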